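(* Let $B \subset \mathbb{R}^3$ be an open ball and let $\hat{P}' \in \mathbb{R}^3 \setminus B$. If $\hat{P} \in C^-(B,\hat{P}')$, then $C^-(B,\hat{P}) \subset C^-(B,\hat{P}')$.
   Context: For a bounded convex set $B \subset \mathbb{R}^3$ and a point $Q \in \mathbb{R}^3$ with $Q \notin B$, the negative half-cone $C^-(B,Q)$ is the set of points $Y \in \mathbb{R}^3 \setminus \mathrm{cl}(B)$ for which there exist $x' \in B$ and $0 < \alpha < 1$ such that $Y - Q = -\alpha (Q - x')$. Here $\mathrm{cl}(S)$ denotes the topological closure of $S$. *)

(* Defs.v *)
From HB Require Import structures.
From mathcomp Require Import all_boot all_order all_algebra.
From mathcomp Require Import all_classical all_reals all_analysis.
Set Implicit Arguments. Unset Strict Implicit. Unset Printing Implicit Defensive.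
Import Order.TTheory GRing.Theory Num.Theory.
Import numFieldNormedType.Exports.
Local Open Scope classical_set_scope.
Local Open Scope ring_scope.

(* Points of R^3 are row vectors 'rV[R]_3; the topology (used for closure)
   is the canonical product/normed topology of 'rV[R]_3, which coincides with
   the Euclidean topology. *)

Definition eucl_dist (R : realType) (x y : 'rV[R]_3) : R :=
  Num.sqrt (\sum_(i < 3) (x ord0 i - y ord0 i) ^+ 2).

Definition open_ball (R : realType) (c : 'rV[R]_3) (r : R) : set 'rV[R]_3 :=
  [set x | eucl_dist x c < r].

Definition neg_half_cone (R : realType) (B : set 'rV[R]_3) (Q : 'rV[R]_3)
  : set 'rV[R]_3 :=
  [set Y | ~ closure B Y /\
     exists x', B x' /\ exists alpha : R, 0 < alpha < 1 /\
       Y - Q = - (alpha *: (Q - x'))].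

(* Main.v *)
Require Import Defs.
From HB Require Import structures.
From mathcomp Require Import all_boot all_order all_algebra.
From mathcomp Require Import all_classical all_reals all_analysis.
From mathcomp Require Import ring lra.
Import Order.TTheory GRing.Theory Num.Theory.
Import numFieldNormedType.Exports.
Local Open Scope classical_set_scope.
Local Open Scope ring_scope.

Lemma sum3 (R : realType) (f : 'I_3 -> R) :
  \sum_(i < 3) f i = f 0 + f 1 + f 2.
Proof. rewrite !big_ord_recr big_ord0 /= add0r. by congr (f _ + f _ + f _); apply: val_inj. Qed.

Lemma sq_conv (R : realType) (s a0 a1 a2 b0 b1 b2 : R) :
  0 <= s <= 1 -> b0^+2 + b1^+2 + b2^+2 <= a0^+2 + a1^+2 + a2^+2 ->
  (s*a0 + (1-s)*b0)^+2 + (s*a1 + (1-s)*b1)^+2 + (s*a2 + (1-s)*b2)^+2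
   <= a0^+2 + a1^+2 + a2^+2.
Proof.
move=> /andP[s0 s1] hab.
have e : (a0^+2 + a1^+2 + a2^+2) -
  ((s*a0 + (1-s)*b0)^+2 + (s*a1 + (1-s)*b1)^+2 + (s*a2 + (1-s)*b2)^+2)
  = (1 - s) * ((a0^+2 + a1^+2 + a2^+2) - (b0^+2 + b1^+2 + b2^+2))
    + s * (1 - s) * ((a0-b0)^+2 + (a1-b1)^+2 + (a2-b2)^+2) by ring.
rewrite -subr_ge0 e addr_ge0 //.
  by rewrite mulr_ge0 ?subr_ge0.
by rewrite !mulr_ge0 ?subr_ge0 // !addr_ge0 // sqr_ge0.
Qed.

Lemma ball_conv (R : realType) (c x y : 'rV[R]_3) (r s : R) :
  0 <= s <= 1 -> open_ball c r x -> open_ball c r y ->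
  open_ball c r (s *: x + (1 - s) *: y).
Proof.
move=> hs; rewrite /open_ball /eucl_dist /= !sum3 !mxE.
have hz : forall i, s * x ord0 i + (1 - s) * y ord0 i - c ord0 i = s * (x ord0 i - c ord0 i) + (1 - s) * (y ord0 i - c ord0 i).
  by move=> i; ring.
rewrite !hz.
move=> hx hy.
case/orP: (le_total
  ((y ord0 0 - c ord0 0)^+2 + (y ord0 1 - c ord0 1)^+2 + (y ord0 2 - c ord0 2)^+2)
  ((x ord0 0 - c ord0 0)^+2 + (x ord0 1 - c ord0 1)^+2 + (x ord0 2 - c ord0 2)^+2)) => h.
  apply: le_lt_trans hx; rewrite ler_sqrt; last by rewrite !addr_ge0 // sqr_ge0.
  exact: sq_conv.
apply: le_lt_trans hy; rewrite ler_sqrt; last by rewrite !addr_ge0 // sqr_ge0.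
have hs' : 0 <= 1 - s <= 1 by case/andP: hs => ? ?; apply/andP; split; lra.
have := @sq_conv R (1 - s)
  (y ord0 0 - c ord0 0) (y ord0 1 - c ord0 1) (y ord0 2 - c ord0 2)
  (x ord0 0 - c ord0 0) (x ord0 1 - c ord0 1) (x ord0 2 - c ord0 2) hs' h.
by rewrite subKr ![(1 - s) * _ + s * _]addrC.
Qed.

Theorem proposition3 (R : realType) (c : 'rV[R]_3) (r : R) (Pp P : 'rV[R]_3) :
  0 < r ->
  ~ open_ball c r Pp ->
  neg_half_cone (open_ball c r) Pp P ->
  neg_half_cone (open_ball c r) P `<=` neg_half_cone (open_ball c r) Pp.
Proof.
move=> _ _ [_ [x [hx [a [/andP[a0 a1] hP]]]]] Y [hY [y [hy [b [/andP[b0 b1] hYe]]]]].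
split => //.
set g := 1 - (1 - b) * (1 - a).
have g0 : 0 < g by rewrite /g; nra.
have g1 : g < 1 by rewrite /g; nra.
set s := (1 - b) * a / g.
have gne : g != 0 by rewrite gt_eqF.
exists (s *: x + (1 - s) *: y); split.
  apply: ball_conv => //; apply/andP; split.
    by rewrite /s; apply: divr_ge0; [apply: mulr_ge0; lra | lra].
  rewrite /s ler_pdivrMr // mul1r /g; nra.
exists g; split; first by rewrite g0 g1.
apply/rowP => i.
have eP := congr1 (fun v : 'rV[R]_3 => v ord0 i) hP.
have eY := congr1 (fun v : 'rV[R]_3 => v ord0 i) hYe.
move: eP eY; rewrite !mxE => eP eY.
have -> : Y ord0 i = P ord0 i - b * (P ord0 i - y ord0 i).
  by rewrite -[Y ord0 i](subrK (P ord0 i)) eY; ring.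
have -> : P ord0 i = Pp ord0 i - a * (Pp ord0 i - x ord0 i).
  by rewrite -[P ord0 i](subrK (Pp ord0 i)) eP; ring.
have o : (0 : 'I_1) = ord0 by []. rewrite !o /s /g; field; exact: gne.
Qed.
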